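(* Let $M\in\mathbb{T}^{n\times n}$ and $q\in\mathbb{T}^n$ be such that no column of $M$ is the all-$(-\infty)$ vector and no entry of $q$ equals $-\infty$, and let $G=(V,E)$ be the associated colored bipartite multigraph. If $F\subset E$ covers all row nodes of $G$, then the point $(w,z)=\alpha(F)$ satisfies $w\oplus M\odot z=q$.
   Context: $\mathbb{T}=\mathbb{R}\cup\{-\infty\}$, $\oplus=\max$, $\odot=+$, $(M\odot z)_i=\max_j(M_{ij}+z_j)$; convention $a-(-\infty)=+\infty$. The graph $G$ has row nodes $u_1,\dots,u_n$ and column nodes $v_1,\dots,v_n$; its edges are a blue edge $u_iv_i$ for every $i$, and a red edge $u_iv_j$ for every $i,j$ such that $q_i-M_{ij}$ is minimal among $q_k-M_{kj}$, $k\in[n]$ (these minima are finite). For $F\subset E$, $\alpha(F)=(w,z)\in\mathbb{T}^n\times\mathbb{T}^n$ where $w_i=q_i$ if the blue edge $u_iv_i$ is in $F$ and $w_i=-\infty$ otherwise, and $z_j=q_i-M_{ij}$ if some red edge $u_iv_j$ is in $F$ and $z_j=-\infty$ otherwise. $F$ covers a node if some edge of $F$ is incident to it. *)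

(* Defs.v *)
From HB Require Import structures.
From mathcomp Require Import all_boot all_order all_algebra.
Set Implicit Arguments. Unset Strict Implicit. Unset Printing Implicit Defensive.
Import Order.TTheory GRing.Theory Num.Theory.
Local Open Scope ring_scope.

(* Tropical semiring T = R ∪ {-oo}, encoded as [option R] with [None] = -oo. *)
Definition trop (R : realDomainType) := option R.

Definition tmax (R : realDomainType) (a b : trop R) : trop R :=
  match a, b with
  | None, _ => b
  | _, None => a
  | Some x, Some y => Some (Num.max x y)
  end.

Definition tmul (R : realDomainType) (a b : trop R) : trop R :=
  match a, b with
  | Some x, Some y => Some (x + y)
  | _, _ => None
  end.

Definition tmatvec (R : realDomainType) (n : nat)
  (M : 'I_n -> 'I_n -> trop R) (z : 'I_n -> trop R) (i : 'I_n) : trop R :=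
  \big[@tmax R/None]_(j < n) tmul (M i j) (z j).

(* Edges of the colored bipartite multigraph:
   [inl i] is the blue edge u_i v_i, [inr (i, j)] is the (potential) red edge u_i v_j. *)
Definition edge (n : nat) : finType := ('I_n + 'I_n * 'I_n)%type.
Definition blue (n : nat) (i : 'I_n) : edge n := inl i.
Definition red (n : nat) (i j : 'I_n) : edge n := inr (i, j).

(* Red-edge condition: q_i - M_ij is minimal among q_k - M_kj, k in [n],
   with the convention a - (-oo) = +oo (so entries with M_kj = -oo never
   realize the minimum, and the minimum is finite). *)
Definition is_red (R : realDomainType) (n : nat)
  (M : 'I_n -> 'I_n -> trop R) (q : 'I_n -> trop R) (i j : 'I_n) : Prop :=
  exists a m, q i = Some a /\ M i j = Some m /\
    forall k a' m', q k = Some a' -> M k j = Some m' -> a - m <= a' - m'.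

Definition in_E (R : realDomainType) (n : nat)
  (M : 'I_n -> 'I_n -> trop R) (q : 'I_n -> trop R) (e : edge n) : Prop :=
  match e with
  | inl _ => True
  | inr (i, j) => is_red M q i j
  end.

Definition covers_row (n : nat) (F : {set edge n}) (i : 'I_n) : Prop :=
  blue i \in F \/ exists j, red i j \in F.

Definition alpha_w (R : realDomainType) (n : nat) (q : 'I_n -> trop R)
  (F : {set edge n}) (i : 'I_n) : trop R :=
  if blue i \in F then q i else None.

(* z_j = q_i - M_ij for some red edge u_i v_j in F (well defined: all such
   values equal the column minimum), -oo if there is none. *)
Definition alpha_z (R : realDomainType) (n : nat)
  (M : 'I_n -> 'I_n -> trop R) (q : 'I_n -> trop R)
  (F : {set edge n}) (j : 'I_n) : trop R :=
  match [pick i | red i j \in F] with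
  | Some i =>
      match q i, M i j with
      | Some a, Some m => Some (a - m)
      | _, _ => None
      end
  | None => None
  end.

(* Main.v *)
Require Import Defs.
From HB Require Import structures.
From mathcomp Require Import all_boot all_order all_algebra.
Import Order.TTheory GRing.Theory Num.Theory.
Local Open Scope ring_scope.

Definition tle (R : realDomainType) (t : trop R) (a : R) : bool :=
  match t with None => true | Some x => x <= a end.
Arguments tle {R}.

Lemma tmax_le (R : realDomainType) (a : R) (t u : trop R) :
  tle t a -> tle u a -> tle (tmax t u) a.
Proof.
case: t => [x|] //; case: u => [y|] //= hx hy.
by rewrite ge_max hx hy.
Qed.

Lemma big_tle (R : realDomainType) (I : eqType) (a : R) (s : seq I) f :
  (forall j, j \in s -> tle (f j) a) ->
  tle (\big[@tmax R/None]_(j <- s) f j) a.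
Proof.
elim: s => [|x s IH] h; first by rewrite big_nil.
rewrite big_cons; apply: tmax_le; first by apply: h; rewrite inE eqxx.
by apply: IH => j hj; apply: h; rewrite inE hj orbT.
Qed.

Lemma big_teq (R : realDomainType) (I : eqType) (a : R) (s : seq I) f :
  (forall j, j \in s -> tle (f j) a) ->
  (exists j, j \in s /\ f j = Some a) ->
  \big[@tmax R/None]_(j <- s) f j = Some a.
Proof.
elim: s => [|x s IH] h [j [hj fj]]; first by [].
have hle : tle (\big[@tmax R/None]_(j <- s) f j) a.
  by apply: big_tle => k hk; apply: h; rewrite inE hk orbT.
rewrite big_cons.
move: hj; rewrite inE => /orP [/eqP Ejx|hj].
  rewrite -Ejx fj /=; move: hle.
  by case: (\big[@tmax R/None]_(j <- s) f j) => [y|] //= hy; rewrite max_l.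
rewrite IH //; last by exists j.
  have := h x; rewrite inE eqxx => /(_ isT).
  by case: (f x) => [y|] //= hy; rewrite max_r.
by move=> k hk; apply: h; rewrite inE hk orbT.
Qed.

Theorem lemma3p1 (R : realDomainType) (n : nat)
  (M : 'I_n -> 'I_n -> trop R) (q : 'I_n -> trop R)
  (hM : forall j : 'I_n, exists i : 'I_n, M i j <> None)
  (hq : forall i : 'I_n, q i <> None)
  (F : {set edge n})
  (hF : forall e, e \in F -> in_E M q e)
  (hcov : forall i : 'I_n, covers_row F i) :
  forall i : 'I_n, tmax (alpha_w q F i) (tmatvec M (alpha_z M q F) i) = q i.
Proof.
move=> i.
case hqi: (q i) => [a|]; last by have := hq i.
have hterm : forall j, tle (tmul (M i j) (alpha_z M q F j)) a.
  move=> j; rewrite /alpha_z.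
  case: pickP => [k hk|]; last by case: (M i j).
  have := hF _ hk => -[b [m [hb [hm hmin]]]].
  rewrite hb hm.
  case hMij: (M i j) => [mij|] //=.
  have := hmin i a mij hqi hMij.
  by move=> H; rewrite addrC -lerBrDr.
have hbig : tle (tmatvec M (alpha_z M q F) i) a.
  by apply: big_tle => j _; apply: hterm.
rewrite /alpha_w.
case: ifP => hb.
  rewrite hqi; move: hbig.
  by case: (tmatvec M (alpha_z M q F) i) => [y|] //= hy; rewrite max_l.
have [|[j hj]] := hcov i; first by rewrite hb.
rewrite /tmatvec /= (@big_teq _ _ a) //; try by move=> k _; apply: hterm.
exists j; split; first by rewrite mem_index_enum.
rewrite /alpha_z.
case: pickP => [k hk|]; last by move/(_ i); rewrite hj.
have := hF _ hk => -[b [m [hb' [hm hmin]]]].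
have := hF _ hj => -[a' [m' [ha' [hm' hmin']]]].
rewrite hb' hm hm' /=.
move: ha'; rewrite hqi => -[Ea]; subst a'.
have h1 := hmin i a m' hqi hm'.
have h2 := hmin' k b m hb' hm.
have -> : b - m = a - m' by apply/eqP; rewrite eq_le h1 h2.
by congr Some; rewrite addrC subrK.
Qed.
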